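(* Let $a(n,k)$ be the number of non-squashing partitions of $n$ into exactly $k$ parts. Then $a(0,0)=1$, $a(n,0)=0$ for $n\ge1$, $a(n,k)=0$ for $k>n$, $a(n,1)=1$ for $n\ge1$, and for $m\ge1,k\ge1$: $$a(2m,k)=a(2m-1,k)+a(m,k-1),\qquad a(2m+1,k)=a(2m,k).$$ For every $k\ge1$, $$\sum_{m\ge0}a(m,k)x^m=\frac{x^{2^{k-1}}}{\prod_{j=0}^{k-1}\left(1-x^{2^j}\right)},$$ and for every $k\ge2$, $$\sum_{m\ge0}a(2m,k)x^m=\frac{x^{2^{k-2}}}{(1-x)\prod_{j=0}^{k-2}\left(1-x^{2^j}\right)}.$$ Consequently, for $k\ge1$, $a(n,k)$ equals the number of partitions of $n-2^{k-1}$ into powers of $2$ not exceeding $2^{k-1}$, and also equals the number of partitions of $n$ into powers of $2$ whose largest part is $2^{k-1}$.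
   Context: A partition $n=p_1+\cdots+p_k$ with $1\le p_1\le\cdots\le p_k$ is non-squashing if $p_1+\cdots+p_j\le p_{j+1}$ for all $1\le j\le k-1$. The empty partition is the unique partition of $0$ and has $0$ parts. *)

(* Defs.v *)
From HB Require Import structures.
From mathcomp Require Import all_boot all_order all_algebra.
Set Implicit Arguments. Unset Strict Implicit. Unset Printing Implicit Defensive.
Import GRing.Theory.

Definition is_partition (n : nat) (s : seq nat) : bool :=
  [&& sorted leq s, all (fun p => 0 < p) s & sumn s == n].

(* Non-squashing: p_1 + ... + p_j <= p_(j+1) for all 1 <= j <= k-1
   (0-indexed: sumn (take j s) <= nth 0 s j for 1 <= j < size s). *)
Definition non_squashing (s : seq nat) : bool :=
  all (fun j => sumn (take j s) <= nth 0 s j) (iota 1 (size s).-1).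

(* Every part of a partition of n is at most n, so tuples over 'I_n.+1
   enumerate all partitions of n with exactly k parts. *)

Definition a (n k : nat) : nat :=
  #|[pred t : k.-tuple 'I_n.+1 |
      is_partition n (map val t) && non_squashing (map val t)]|.

Definition npart (Q : pred (seq nat)) (n : nat) : nat :=
  \sum_(k < n.+1)
     #|[pred t : k.-tuple 'I_n.+1 | is_partition n (map val t) && Q (map val t)]|.

Definition is_pow2 (p : nat) : bool := p \in [seq 2 ^ e | e <- iota 0 p.+1].

(* Formal power series identity  (sum_m f m x^m) * Q(x) = P(x)  in Z[[x]],
   stated coefficientwise (the n-th coefficient of the product only depends
   on f 0, ..., f n). Since Q has constant term 1 below, this is the same as
   sum_m f m x^m = P / Q. *)
Local Open Scope ring_scope.
Definition series_mul_eq (f : nat -> int) (Q P : {poly int}) : Prop :=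
  forall n : nat, ((\poly_(i < n.+1) f i) * Q)`_n = P`_n.

(* Main.v *)
Require Import Defs.
From HB Require Import structures.
From mathcomp Require Import all_boot all_order all_algebra zify.
Import GRing.Theory.

Fixpoint seqs (N k : nat) : seq (seq nat) :=
  if k is k'.+1 then [seq rcons s x | s <- seqs N k', x <- iota 0 N] else [:: [::]].

Lemma mem_seqs N k s : (s \in seqs N k) = (size s == k) && all (fun x => x < N) s.
Proof.
elim: k s => [|k IH] s /=.
  by rewrite inE; case: s.
apply/allpairsP/idP.
  case=> [[s' x]] /= [Hs' Hx ->]; move: Hs'; rewrite IH size_rcons all_rcons.
  move: Hx; rewrite mem_iota /= => Hx /andP[/eqP -> ->]; by rewrite eqxx Hx.
case/lastP: s => [|s x]; first by [].
rewrite size_rcons all_rcons eqSS => /andP[Hk /andP[Hx Ha]].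
by exists (s, x); rewrite /= IH Hk Ha mem_iota.
Qed.

Lemma seqs_uniq N k : uniq (seqs N k).
Proof.
elim: k => [|k IH] //=.
apply: allpairs_uniq => //; first exact: iota_uniq.
by move=> [s x] [s' x'] _ _ /= /rcons_inj.
Qed.

Lemma count_perm (T : eqType) (P : pred T) (s1 s2 : seq T) :
  uniq s1 -> uniq s2 -> s1 =i s2 -> count P s1 = count P s2.
Proof. by move=> u1 u2 e; apply/(permP (uniq_perm u1 u2 e)). Qed.

Lemma card_tuples N k (P : pred (seq nat)) :
  #|[pred t : k.-tuple 'I_N | P (map val t)]| = count P (seqs N k).
Proof.
rewrite cardE /enum_mem size_filter -enumT.
set E := enum _.
have -> : count (mem [pred t : k.-tuple 'I_N | P [seq val i | i <- t]]) E
   = count P (map (fun t : k.-tuple 'I_N => map val t) E).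
  by rewrite count_map.
apply: count_perm; first 2 last.
- move=> s; rewrite mem_seqs; apply/mapP/idP.
    case=> t _ ->; rewrite size_map size_tuple eqxx /=.
    by apply/allP => x /mapP [i _ ->].
  case/andP=> /eqP Hs Ha.
  have Hsz : size (pmap (insub : nat -> option 'I_N) s) == k.
    by rewrite size_pmap_sub; move: (Ha); rewrite all_count Hs.
  exists (Tuple Hsz); first by rewrite mem_enum.
  rewrite /= (pmap_filter (@insubK _ _ _)).
  apply/esym/all_filterP; apply: sub_all Ha => x /= Hx.
  by case: insubP => //; rewrite Hx.
- rewrite (map_inj_uniq (f := fun t : k.-tuple 'I_N => map val t)); first exact: enum_uniq.
  by move=> t1 t2 /= H; apply: val_inj; apply: (inj_map val_inj).
- exact: seqs_uniq.
Qed.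

Fixpoint b (n k : nat) : nat :=
  if k is k'.+1 then (if n is 0 then 0 else \sum_(s < n./2.+1) b s k') else (n == 0).
Fixpoint c (n K : nat) : nat :=
  if K is K'.+1 then \sum_(t < n./2.+1) c t K' else 1.

Lemma sumshift (g : nat -> nat) M N :
  \sum_(t < N.+1) (if M <= t then g (t - M) else 0) =
  if M <= N then \sum_(t < (N - M).+1) g t else 0.
Proof.
elim: N => [|N IH]; first by rewrite big_ord_recr big_ord0 /=; case: M => [|M] //=; rewrite big_ord_recr big_ord0.
rewrite big_ord_recr /= IH.
case: (leqP M N) => H1.
  by rewrite (leqW H1) subSn // [RHS]big_ord_recr.
case: (ltngtP M N.+1) => H2.
- by move: H1 H2; rewrite ltnS => /leq_trans H /H; rewrite ltnn.
- by rewrite addn0.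
- by rewrite H2 subnn big_ord_recr big_ord0.
Qed.

Lemma half_sub n m : (n - m.*2)./2 = n./2 - m.
Proof. rewrite -!divn2 -muln2; lia. Qed.

Lemma half_le m n : (m <= n./2) = (m.*2 <= n).
Proof. rewrite -divn2 -muln2; lia. Qed.

Lemma bS n k : b n k.+1 = if n is 0 then 0 else \sum_(s < n./2.+1) b s k.
Proof. by []. Qed.
Lemma cS n K : c n K.+1 = \sum_(t < n./2.+1) c t K.
Proof. by []. Qed.

Lemma bc k n : b n k.+1 = if 2 ^ k <= n then c (n - 2 ^ k) k else 0.
Proof.
elim: k n => [|k IH] n.
  case: n => [|n] //=; rewrite big_ord_recl /= big1 //.
rewrite bS; case: n => [|n]; first by rewrite leqNgt expn_gt0.
under eq_bigr do rewrite IH.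
rewrite (sumshift (fun t => c t k)) half_le expnSr muln2.
case: ifP => // _.
by rewrite cS half_sub.
Qed.

Lemma crem K n :
  c n K.+1 = c n K + (if 2 ^ K.+1 <= n then c (n - 2 ^ K.+1) K.+1 else 0).
Proof.
elim: K n => [|K IH] n.
  rewrite /= !sum_nat_const !card_ord /= expn1.
  case: ifP => H; rewrite ?muln1; last by (have: n./2 = 0 by rewrite -divn2; lia) => ->.
  rewrite -!divn2; lia.
rewrite cS.
under eq_bigr do rewrite IH.
rewrite big_split -cS.
rewrite (sumshift (fun t => c t K.+1)) half_le [2 ^ K.+2]expnSr muln2.
case: ifP => // _.
by rewrite [c _ K.+2]cS half_sub.
Qed.

Lemma sorted_rcons s x : sorted leq (rcons s x) = sorted leq s && (last 0 s <= x).
Proof. by case: s => [|y s] //=; rewrite rcons_path. Qed.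

Lemma path_le_last y s : path leq y s -> all (fun x => x <= last y s) (y :: s).
Proof.
elim: s y => [|z s IH] y /=; first by rewrite leqnn.
case/andP=> Hyz /IH /= /andP[Hz ->]; by rewrite (leq_trans Hyz Hz) Hz.
Qed.

Lemma sorted_le_last s x : sorted leq s -> x \in s -> x <= last 0 s.
Proof.
case: s => [|y s] //= /path_le_last /allP H /H; done.
Qed.

Lemma mem_le_sumn s x : x \in s -> x <= sumn s.
Proof.
elim: s => [|y s IH] //=; rewrite inE => /orP[/eqP -> | /IH]; first exact: leq_addr.
by move=> H; apply: leq_trans H (leq_addl _ _).
Qed.

Lemma last_le_sumn s : last 0 s <= sumn s.
Proof.
have := mem_last 0 s; rewrite inE => /orP[/eqP -> //|]; exact: mem_le_sumn.
Qed.

Lemma size_le_sumn s : all (fun p => 0 < p) s -> size s <= sumn s.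
Proof. elim: s => [|y s IH] //= /andP[Hy /IH]; lia. Qed.

Lemma ns_rcons s x : non_squashing (rcons s x) = non_squashing s && (sumn s <= x).
Proof.
rewrite /non_squashing size_rcons [(_.+1).-1]/=.
case E: (size s) => [|m]; first by move/size0nil: E => ->.
have -> : m.+1.-1 = m by [].
have -> : iota 1 m.+1 = iota 1 m ++ [:: m.+1] by rewrite -[m.+1]addn1 iotaD addnC.
rewrite all_cat /= andbT.
congr andb.
  apply: eq_in_all => j; rewrite mem_iota => /andP[_ Hj].
  rewrite -cats1 takel_cat; last lia.
  by rewrite nth_cat ifT //; lia.
rewrite -cats1 -E take_size_cat // nth_cat ltnn subnn.
by [].
Qed.

Definition NSP n s := is_partition n s && non_squashing s.

Lemma NSP_rcons n s x :
  NSP n (rcons s x) =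
  (x == n - sumn s) && [&& NSP (sumn s) s, (sumn s).*2 <= n & 0 < n].
Proof.
rewrite /NSP /is_partition ns_rcons sorted_rcons all_rcons sumn_rcons eqxx /=.
have H1 := last_le_sumn s.
rewrite -addnn andbT.
case: (sorted leq s); case: (all _ s); case: (non_squashing s); rewrite /= ?andbF //.
apply/idP/idP; lia.
Qed.

Lemma count_restrict (P : pred (seq nat)) U V :
  uniq U -> uniq V -> (forall s, P s -> (s \in U) = (s \in V)) ->
  count P U = count P V.
Proof.
move=> uU uV H; rewrite -!size_filter.
apply: perm_size; apply: uniq_perm; rewrite ?filter_uniq //.
by move=> s; rewrite !mem_filter; case Ps: (P s) => //=; rewrite H.
Qed.

Lemma split_count (T : Type) (P : pred T) (f : T -> nat) U M :
  \sum_(t < M) count (fun s => P s && (f s == t)) U = count (fun s => P s && (f s < M)) U.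
Proof.
elim: U => [|x U IH] /=; first by rewrite big1.
rewrite big_split /= IH; congr addn.
case: (P x) => /=; last by rewrite big1.
move: (f x) => v; clear.
elim: M => [|M IHM]; first by rewrite big_ord0.
by rewrite big_ord_recr /= IHM ltnS; case: ltngtP.
Qed.

Lemma count_iota_eq N v (bb : bool) (P : pred nat) :
  (forall x, P x = (x == v) && bb) -> count P (iota 0 N) = (v < N) && bb.
Proof.
move=> H; rewrite (eq_count H); clear H; case: bb.
  rewrite (eq_count (a2 := pred1 v)); last by move=> x; rewrite andbT.
  by rewrite count_uniq_mem ?iota_uniq // mem_iota andbT.
rewrite andbF; apply/eqP; rewrite -leqn0 leqNgt -has_count; apply/hasP => -[x _]; by rewrite andbF.
Qed.

Lemma sum_count (T : Type) (P : pred T) U : \sum_(s <- U) (P s : nat) = count P U.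
Proof. by elim: U => [|x U IH]; rewrite ?big_nil ?big_cons ?IH. Qed.

Lemma count_seqsS N k (P : pred (seq nat)) :
  count P (seqs N k.+1) = \sum_(s <- seqs N k) count (fun x => P (rcons s x)) (iota 0 N).
Proof.
rewrite /= count_flatten sumnE !big_map; apply: eq_bigr => s _; by rewrite count_map.
Qed.

Lemma part_le t s : is_partition t s -> all (fun x => x < t.+1) s && (size s < t.+1).
Proof.
case/and3P=> _ Hp /eqP Hs; rewrite ltnS -{2}Hs size_le_sumn // andbT.
by apply/allP => x Hx; rewrite ltnS -Hs mem_le_sumn.
Qed.

Lemma a_count n k : a n k = count (NSP n) (seqs n.+1 k).
Proof. exact: (card_tuples n.+1 k (NSP n)). Qed.

Lemma a_b n k : a n k = b n k.
Proof.
elim: k n => [|k IH] n.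
  by rewrite a_count /= addn0 /NSP /is_partition /= andbT eq_sym.
rewrite a_count count_seqsS bS.
under eq_bigr => s _ do rewrite (count_iota_eq _ _ _ _ (NSP_rcons n s)).
rewrite sum_count.
case: n => [|n].
  by rewrite (eq_count (a2 := pred0)) ?count_pred0 // => s; rewrite !andbF.
rewrite (eq_count (a2 := fun s => NSP (sumn s) s && (sumn s < n.+1./2.+1))); last first.
  by move=> s; rewrite ltnS leq_subr [sumn s < _]ltnS half_le ?leq0n ?ltn0Sn andbT andTb.
have := split_count _ (fun s => NSP (sumn s) s) sumn (seqs n.+2 k) (n.+1./2.+1).
rewrite /= => <-; apply: eq_bigr => t _.
rewrite -IH a_count.
rewrite (eq_count (a2 := NSP t)); last first.
  by move=> s; rewrite /NSP /is_partition eqxx; case: (sumn s == t); rewrite ?andbT ?andbF.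
apply: count_restrict; rewrite ?seqs_uniq // => s /andP[/part_le /andP[Ha _] _].
rewrite !mem_seqs; case: (size s == k) => //=.
have Ht : (t : nat) < n.+1./2.+1 by [].
have Ht' : (t : nat) <= n.+1 by move: Ht; rewrite -divn2; lia.
rewrite Ha; apply: sub_all Ha => x /=; lia.
Qed.

Definition allseqs N L := flatten [seq seqs N k | k <- iota 0 L].

Lemma mem_allseqs N L s : (s \in allseqs N L) = (size s < L) && all (fun x => x < N) s.
Proof.
apply/flattenP/idP.
  case=> u /mapP [k]; rewrite mem_iota => /andP[_ Hk] ->; rewrite mem_seqs.
  by case/andP=> /eqP Hs ->; rewrite Hs andbT.
case/andP=> Hs Ha; exists (seqs N (size s)); last by rewrite mem_seqs eqxx.
by apply: map_f; rewrite mem_iota.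
Qed.

Lemma allseqs_uniq N L : uniq (allseqs N L).
Proof.
elim: L => [|L IH] //.
rewrite /allseqs -addn1 iotaD map_cat flatten_cat /= cats0 cat_uniq IH seqs_uniq andbT /=.
apply/hasP => -[s]; rewrite mem_seqs => /andP[/eqP Hs _].
by rewrite -/(allseqs N L) mem_allseqs Hs ltnn.
Qed.

Lemma npartE (Q : pred (seq nat)) n :
  npart Q n = count (fun s => is_partition n s && Q s) (allseqs n.+1 n.+1).
Proof.
rewrite /npart /allseqs count_flatten sumnE !big_map -(subn0 n.+1) -/(index_iota 0 n.+1) big_mkord subn0.
apply: eq_bigr => k _.
exact: (card_tuples n.+1 k (fun s => is_partition n s && Q s)).
Qed.

Lemma count_allseqsS N L (P : pred (seq nat)) :
  count P (allseqs N L.+1) =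
  P [::] + \sum_(s <- allseqs N L) count (fun x => P (rcons s x)) (iota 0 N).
Proof.
set R := [seq rcons s x | s <- allseqs N L, x <- iota 0 N].
have -> : count P (allseqs N L.+1) = count P ([::] :: R).
  apply: count_perm; rewrite ?allseqs_uniq //=.
  - rewrite /R allpairs_uniq ?allseqs_uniq ?iota_uniq ?andbT //=.
      apply/negP => /allpairsP [[s x] [_ _]] /=; by rewrite -cats1; case: s.
    by move=> [s x] [s' x'] _ _ /= /rcons_inj.
  - move=> s; rewrite /R mem_allseqs inE; case/lastP: s => [|s x] //=.
    have -> : (rcons s x == [::]) = false by rewrite -cats1; case: s.
    rewrite /= size_rcons all_rcons ltnS; apply/idP/idP.
      case/andP=> Hs /andP[Hx Ha]; apply/allpairsP; exists (s, x).
      by rewrite /= mem_allseqs Hs Ha mem_iota.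
    case/allpairsP => -[s' x'] /= [Hs' Hx' /rcons_inj [-> ->]].
    by move: Hs' Hx'; rewrite mem_allseqs mem_iota => /andP[-> ->] /andP[_ ->].
rewrite /= count_flatten sumnE !big_map; congr addn; apply: eq_bigr => s _.
by rewrite count_map.
Qed.

Lemma count_allseqs_restrict (P : pred (seq nat)) N L N' L' :
  (forall s, P s -> [&& size s < L, size s < L', all (fun x => x < N) s &
                        all (fun x => x < N') s]) ->
  count P (allseqs N L) = count P (allseqs N' L').
Proof.
move=> H; apply: count_restrict; rewrite ?allseqs_uniq // => s /H /and4P[h1 h2 h3 h4].
by rewrite !mem_allseqs h1 h2 h3 h4.
Qed.

Lemma count_splitq (T : Type) (P q : pred T) s :
  count P s = count (fun x => P x && q x) s + count (fun x => P x && ~~ q x) s.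
Proof. elim: s => [|x s IH] //=; rewrite IH; case: (P x); case: (q x) => /=; lia. Qed.

Lemma pow2P p : reflect (exists e, p = 2 ^ e) (is_pow2 p).
Proof.
apply: (iffP mapP).
  by case=> e _ ->; exists e.
case=> e ->; exists e => //; rewrite mem_iota /= add0n ltnS; apply: ltnW; exact: ltn_expl.
Qed.

Lemma pow2_exp e : is_pow2 (2 ^ e).
Proof. by apply/pow2P; exists e. Qed.

Lemma pow2_gt0 p : is_pow2 p -> 0 < p.
Proof. by case/pow2P => e ->; rewrite expn_gt0. Qed.

Lemma pow2_lt p K : is_pow2 p -> p < 2 ^ K.+1 -> p <= 2 ^ K.
Proof.
case/pow2P => e -> H; rewrite leq_exp2l //; move: H; rewrite ltn_exp2l //.
Qed.

Definition BPc K n s := is_partition n s && all (fun p => is_pow2 p && (p <= 2 ^ K)) s.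
Definition E n K := count (BPc K n) (allseqs n.+1 n.+1).

Lemma EE K n : npart (fun s => all (fun p => is_pow2 p && (p <= 2 ^ K)) s) n = E n K.
Proof. by rewrite npartE. Qed.

Lemma BPc_bound K n s : BPc K n s -> all (fun x => x < n.+1) s && (size s < n.+1).
Proof. by case/andP => /part_le. Qed.

Lemma sorted_nseq n x : sorted leq (nseq n x).
Proof. by elim: n => [|[|n] IH] //=; rewrite leqnn. Qed.

Lemma E0 n : E n 0 = 1.
Proof.
rewrite /E (eq_count (a2 := pred1 (nseq n 1))); last first.
  move=> s /=; apply/idP/eqP.
    case/andP=> /and3P[_ _ /eqP Hs] Ha.
    have /all_pred1P Hs1 : all (pred1 1) s.
      apply: sub_all Ha => p /andP[/pow2_gt0 H1 H2] /=; rewrite eqn_leq H2 //.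
    by rewrite Hs1 sumn_nseq mul1n in Hs; rewrite -Hs.
  move=> ->; rewrite /BPc /is_partition sorted_nseq sumn_nseq mul1n eqxx andbT /=.
  by rewrite !all_nseq (pow2_exp 0) !orbT.
rewrite count_uniq_mem ?allseqs_uniq // mem_allseqs size_nseq leqnn /=.
by rewrite all_nseq; case: n.
Qed.

Lemma BPc_last K n s : BPc K n s -> last 0 s <= 2 ^ K.
Proof.
case/andP=> _ /allP Ha.
have := mem_last 0 s; rewrite inE => /orP[/eqP -> //|/Ha /andP[]] //.
Qed.

Lemma BPc_split K n s : BPc K.+1 n s && ~~ (last 0 s == 2 ^ K.+1) = BPc K n s.
Proof.
apply/idP/idP.
  case/andP=> H Hl; have Hle := BPc_last _ _ _ H.
  move: H => /andP[Hp Ha]; rewrite /BPc Hp /=.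
  have Hl' : last 0 s <= 2 ^ K.
    have := mem_last 0 s; rewrite inE => /orP[/eqP -> //|Hm].
    move/allP: Ha => /(_ _ Hm) /andP[Hpow _].
    by apply: pow2_lt => //; rewrite ltn_neqAle Hl Hle.
  apply/allP => p Hps; move/allP: Ha => /(_ _ Hps) /andP[-> _] /=.
  apply: leq_trans Hl'; apply: sorted_le_last => //; by case/and3P: Hp.
move=> H; have Hl := BPc_last _ _ _ H.
have HK : 2 ^ K < 2 ^ K.+1 by rewrite ltn_exp2l.
apply/andP; split; last by apply/negP => /eqP E1; move: Hl; rewrite E1 leqNgt HK.
move: H => /andP[Hp Ha]; rewrite /BPc Hp /=; apply: sub_all Ha => p /andP[-> H] /=.
by apply: leq_trans H (ltnW HK).
Qed.

Lemma BPc_rcons K n s x :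
  BPc K n (rcons s x) && (last 0 (rcons s x) == 2 ^ K) =
  (x == 2 ^ K) && (BPc K (n - 2 ^ K) s && (2 ^ K <= n)).
Proof.
rewrite last_rcons; case: (x =P 2 ^ K) => [->|]; last by rewrite andbF.
rewrite /BPc /is_partition sorted_rcons all_rcons sumn_rcons all_rcons pow2_exp leqnn expn_gt0 /=.
case Ha: (all (fun p => is_pow2 p && (p <= 2 ^ K)) s); rewrite ?andbF ?andFb //=.
have Hl : last 0 s <= 2 ^ K.
  have := mem_last 0 s; rewrite inE => /orP[/eqP -> //|Hm].
  by move/allP: Ha => /(_ _ Hm) /andP[].
rewrite Hl !andbT; case: (sorted leq s) => //=; case: (all _ s) => //=; lia.
Qed.

Lemma Lcount K n :
  count (fun s => BPc K n s && (last 0 s == 2 ^ K)) (allseqs n.+1 n.+1) =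
  if 2 ^ K <= n then E (n - 2 ^ K) K else 0.
Proof.
rewrite count_allseqsS [last 0 [::]]/= eq_sym expn_eq0 andbF add0n.
under eq_bigr => s _ do rewrite (count_iota_eq _ _ _ _ (BPc_rcons K n s)).
rewrite sum_count.
case: ifP => H; last first.
  by apply/eqP; rewrite -leqn0 leqNgt -has_count; apply/hasP => -[s _]; rewrite !andbF.
rewrite (eq_count (a2 := BPc K (n - 2 ^ K))); last first.
  by move=> s; rewrite ltnS H andbT.
apply: count_allseqs_restrict => s /BPc_bound /andP[Ha Hs].
have HK : 0 < 2 ^ K by rewrite expn_gt0.
rewrite Hs Ha /= andbT; apply/andP; split; first lia.
apply: sub_all Ha => x /=; lia.
Qed.

Lemma ES K n : E n K.+1 = E n K + (if 2 ^ K.+1 <= n then E (n - 2 ^ K.+1) K.+1 else 0).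
Proof.
rewrite /E (count_splitq _ (BPc K.+1 n) (fun s => last 0 s == 2 ^ K.+1)) addnC.
congr addn; first by apply: eq_count => s; rewrite BPc_split.
exact: Lcount.
Qed.

Lemma E_c K n : E n K = c n K.
Proof.
elim: K n => [|K IH] n; first by rewrite E0.
elim/ltn_ind: n => n IHn.
rewrite ES crem IH; case: ifP => // H; rewrite IHn //.
have : 0 < 2 ^ K.+1 by rewrite expn_gt0.
lia.
Qed.

Local Open Scope ring_scope.
Arguments c : simpl never.
Arguments b : simpl never.

Definition conv (f : nat -> int) (Q : {poly int}) n := \sum_(j < n.+1) f j * Q`_(n - j).

Lemma trunc_conv f Q n : ((\poly_(i < n.+1) f i) * Q)`_n = conv f Q n.
Proof. rewrite coefM; apply: eq_bigr => j _; by rewrite coef_poly ltn_ord. Qed.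

Lemma coef_mul_eq (p p' Q : {poly int}) n :
  (forall i, (i <= n)%N -> p`_i = p'`_i) -> (p * Q)`_n = (p' * Q)`_n.
Proof. move=> H; rewrite !coefM; apply: eq_bigr => j _; by rewrite H // -ltnS. Qed.

Lemma conv_ext f g Q n : f =1 g -> conv f Q n = conv g Q n.
Proof. by move=> H; apply: eq_bigr => j _; rewrite H. Qed.

Definition D m (f : nat -> int) i := f i - (if (m <= i)%N then f (i - m)%N else 0).

Lemma conv_1X f m Q n : conv f ((1 - 'X^m) * Q) n = conv (D m f) Q n.
Proof.
rewrite -!trunc_conv mulrA; apply: coef_mul_eq => i Hi.
rewrite mulrBr mulr1 coefB coefMXn !coef_poly ltnS Hi /D.
case: (ltnP i m) => H //.
rewrite ifT //; lia.
Qed.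

Lemma conv1 g n : conv g 1 n = g n.
Proof.
rewrite /conv big_ord_recr /= subnn coef1 eqxx mulr1 big1 ?add0r // => j _.
by rewrite coef1 subn_eq0 leqNgt ltn_ord mulr0.
Qed.

Lemma sumshiftZ (g : nat -> int) M N :
  \sum_(t < N.+1) (if (M <= t)%N then g (t - M)%N else 0) =
  if (M <= N)%N then \sum_(t < (N - M).+1) g t else 0.
Proof.
elim: N => [|N IH]; first by rewrite big_ord_recr big_ord0 /=; case: M => [|M] //=; rewrite big_ord_recr big_ord0.
rewrite big_ord_recr /= IH.
case: (leqP M N) => H1.
  by rewrite (leqW H1) subSn // [RHS]big_ord_recr.
case: (ltngtP M N.+1) => H2.
- by move: H1 H2; rewrite ltnS => /leq_trans H /H; rewrite ltnn.
- by rewrite addr0.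
- by rewrite H2 subnn big_ord_recr big_ord0 /= add0r.
Qed.

Lemma conv_shift g Q M n :
  conv (fun i => if (M <= i)%N then g (i - M)%N else 0) Q n =
  if (M <= n)%N then conv g Q (n - M) else 0.
Proof.
rewrite /conv -(sumshiftZ (fun u => g u * Q`_(n - M - u)%N)).
apply: eq_bigr => j _; case: ifP => H; rewrite ?mul0r //.
have Hj := ltn_ord j; congr (_ * Q`_ _); lia.
Qed.

Lemma conv_c K n :
  conv (fun i => (c i K)%:Z) (\prod_(j < K.+1) (1 - 'X^(2 ^ j))) n = (n == 0)%:R.
Proof.
elim: K n => [|K IH] n.
  rewrite big_ord_recr big_ord0 /= mul1r -[1 - _]mulr1 conv_1X conv1 /D.
  by case: n.
rewrite big_ord_recr /= mulrC conv_1X -IH; apply: conv_ext => i.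
rewrite /D crem PoszD; case: ifP => _; first by rewrite addrK.
by rewrite addr0 subr0.
Qed.

Lemma conv_b k n :
  conv (fun i => (b i k.+1)%:Z) (\prod_(j < k.+1) (1 - 'X^(2 ^ j))) n = (n == 2 ^ k)%N%:R.
Proof.
rewrite (conv_ext (fun i => (b i k.+1)%:Z) (fun i => if (2 ^ k <= i)%N then (c (i - 2 ^ k)%N k)%:Z else 0) _ n); last first.
  by move=> i; rewrite bc; case: ifP.
have := conv_shift (fun u => (c u k)%:Z) (\prod_(j < k.+1) (1 - 'X^(2 ^ j))) (2 ^ k)%N n.
rewrite /= => ->; rewrite (conv_c k); case: ifP => H.
  by congr (_%:R); apply/eqP/eqP; lia.
by case: eqP => // E1; move: H; rewrite E1 leqnn.
Qed.

Lemma b2 i k : b (2 * i) k.+2 = (\sum_(s < i.+1) b s k.+1)%N.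
Proof.
case: i => [|i]; first by rewrite big_ord_recr big_ord0.
rewrite bS mul2n doubleS; have -> : i.*2.+2./2 = i.+1 by rewrite -divn2 -muln2; lia.
by [].
Qed.

Local Open Scope ring_scope.
Arguments c : simpl never.
Arguments b : simpl never.

Lemma bpos n k : (0 < n)%N -> b n k.+1 = (\sum_(s < n./2.+1) b s k)%N.
Proof. by case: n. Qed.

Theorem theorem3 :
  a 0 0 = 1%N /\
      (forall n : nat, (1 <= n)%N -> a n 0 = 0%N) /\
      (forall n k : nat, (n < k)%N -> a n k = 0%N) /\
      (forall n : nat, (1 <= n)%N -> a n 1 = 1%N) /\
      (forall m k : nat, (1 <= m)%N -> (1 <= k)%N ->
         a (2 * m) k = (a (2 * m - 1) k + a m (k - 1))%N /\
         a (2 * m + 1) k = a (2 * m) k) /\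
      (forall k : nat, (1 <= k)%N ->
         series_mul_eq (fun m => (a m k)%:Z)
           (\prod_(j < k) (1 - 'X^(2 ^ j)))
           'X^(2 ^ (k - 1))) /\
      (forall k : nat, (2 <= k)%N ->
         series_mul_eq (fun m => (a (2 * m) k)%:Z)
           ((1 - 'X) * \prod_(j < k.-1) (1 - 'X^(2 ^ j)))
           'X^(2 ^ (k - 2))) /\
      (forall n k : nat, (1 <= k)%N ->
         a n k = (if (2 ^ (k - 1) <= n)%N then
                    npart (fun s => all (fun p => is_pow2 p && (p <= 2 ^ (k - 1))%N) s)
                          (n - 2 ^ (k - 1))
                  else 0%N)) /\
    (forall n k : nat, (1 <= k)%N ->
         a n k = npart (fun s => all is_pow2 s && (last 0%N s == 2 ^ (k - 1))%N) n).
Proof.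
split; first by rewrite a_b.
split; first by move=> n Hn; rewrite a_b /b; case: n Hn.
split.
  move=> n [|k] // Hn; rewrite a_b bc ifF //.
  apply/negbTE; rewrite -ltnNge; have := @ltn_expl 2 k isT; lia.
split; first by move=> n Hn; rewrite a_b bc expn0 Hn.
split.
  move=> m [|k] // Hm _; rewrite !a_b subn1 /= !bpos; try lia.
  have -> : (2 * m)./2 = m by rewrite -divn2; lia.
  have -> : (2 * m).-1./2 = m.-1 by rewrite -divn2; lia.
  have -> : (2 * m + 1)./2 = m by rewrite -divn2; lia.
  split => //; case: m Hm => // m _; by rewrite subSS subn0 [in LHS]big_ord_recr.
split.
  move=> [|k] // _ n; rewrite trunc_conv coefXn subn1 /=.
  rewrite -conv_b; apply: conv_ext => i; by rewrite a_b.
split.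
  move=> [|[|k]] // _ n; rewrite trunc_conv coefXn -['X]expr1 conv_1X.
  rewrite !subSS subn0 [k.+2.-1]/=.
  rewrite -conv_b; apply: conv_ext => i; rewrite /D !a_b !b2.
  case: i => [|i]; first by rewrite big_ord_recr big_ord0 /= subr0.
  rewrite /= subn1 /= big_ord_recr /= PoszD addrAC subrr add0r.
  by [].
split.
  move=> n [|k] // _; rewrite a_b bc subn1 /= EE E_c.
  by [].
move=> n [|k] // _; rewrite a_b bc subn1 /= npartE.
rewrite (eq_count (a2 := fun s => BPc k n s && (last 0%N s == 2 ^ k)%N)); last first.
  move=> s; rewrite /BPc; case: eqP => Hl; rewrite ?andbF //= !andbT.
  case Hp: (is_partition n s) => //=.
  apply: eq_in_all => p Hps /=; rewrite -Hl sorted_le_last ?andbT //; by case/and3P: Hp.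
by have := Lcount k n; rewrite E_c => ->.
Qed.
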